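(* Define the following four subsets of $\mathbb{R}^5$. (1) $D_5$ is the set of all $40$ vectors obtained by permuting the coordinates of $(\pm 1,\pm 1,0,0,0)$ (all sign choices). (2) $L_5$ is obtained from $D_5$ by removing the $8$ vectors whose fifth coordinate equals $1$ (namely the permutations of $(\pm1,0,0,0)$ in the first four coordinates, with fifth coordinate $1$) and adding the $8$ vectors $(\pm\tfrac12,\pm\tfrac12,\pm\tfrac12,\pm\tfrac12,1)$ having an odd number of minus signs among the first four coordinates. (3) $Q_5$ is obtained from $D_5$ by removing the $10$ vectors with coordinate sum $2$ (the permutations of $(1,1,0,0,0)$) and adding the $10$ vectors obtained by permuting the coordinates of $(-\tfrac15,-\tfrac15,\tfrac45,\tfrac45,\tfrac45)$. (These are the images of the $10$ vectors with coordinate sum $-2$ under the reflection $v\mapsto v-2\langle v,w\rangle w$, $w=(1,1,1,1,1)/\sqrt5$, across the hyperplane of coordinate sum $0$.) (4) $R_5$ is obtained from $L_5$ by removing the $10$ vectors of $L_5$ with coordinate sum $2$ and adding the $10$ vectors obtained by permuting the coordinates of $(-\tfrac15,-\tfrac15,\tfrac45,\tfrac45,\tfrac45)$. Then each of $D_5$, $L_5$, $Q_5$, $R_5$ is a kissing configuration of $40$ points in $\mathbb{R}^5$, and no two of them are isometric. In particular, there are at least four pairwise non-isometric kissing configurations of $40$ points in five dimensions.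
   Context: A kissing configuration in $\mathbb{R}^n$ is a finite set of vectors all of the same norm $r>0$ such that any two distinct vectors form an angle of at least $\pi/3$, i.e. have inner product at most $r^2/2$; here all vectors have squared norm $2$, so the condition is that distinct vectors have inner product at most $1$. Two configurations are isometric if some orthogonal transformation of $\mathbb{R}^n$ maps one onto the other. *)

(* Defs.v *)
From mathcomp Require Import all_boot all_order all_algebra.
From mathcomp Require Import reals.
Set Implicit Arguments. Unset Strict Implicit. Unset Printing Implicit Defensive.
Import Order.TTheory GRing.Theory Num.Theory.
Local Open Scope ring_scope.

Section Kissing.
Variable R : realType.

Definition dotv n (u v : 'rV[R]_n) : R := \sum_(k < n) u 0 k * v 0 k.

Definition kissing_config n (S : seq 'rV[R]_n) : Prop :=
  uniq S /\
  exists r : R, 0 < r /\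
    (forall v, v \in S -> dotv v v = r ^+ 2) /\
    (forall u v, u \in S -> v \in S -> u != v -> dotv u v <= r ^+ 2 / 2).

Definition orthogonal_mx n (Q : 'M[R]_n) : Prop := Q *m Q^T = 1%:M.

Definition isometric n (S T : seq 'rV[R]_n) : Prop :=
  exists Q : 'M[R]_n, orthogonal_mx Q /\ map (fun v => v *m Q) S =i T.

Definition sgn (b : bool) : R := if b then -1 else 1.

Definition pairs5 : seq ('I_5 * 'I_5) :=
  [seq ij : 'I_5 * 'I_5 <- enum {: 'I_5 * 'I_5} | (ij.1 < ij.2)%N].

Definition coord_sum (v : 'rV[R]_5) : R := \sum_(k < 5) v 0 k.

Definition D5 : seq 'rV[R]_5 :=
  [seq \row_k (if k == ij.1 then sgn ab.1 else if k == ij.2 then sgn ab.2 else 0)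
  | ij <- pairs5, ab <- enum {: bool * bool}].

(* (+-1/2,+-1/2,+-1/2,+-1/2,1) with an odd number of minus signs among the
   first four coordinates; s k = true means a minus sign at coordinate k. *)
Definition halves5 : seq 'rV[R]_5 :=
  [seq \row_k (if k == ord_max then 1 else sgn (s k) / 2)
  | s : {ffun 'I_5 -> bool} <- enum {: {ffun 'I_5 -> bool}}
  & ~~ s ord_max && odd #|[pred i | s i]| ].

Definition P5 : seq 'rV[R]_5 :=
  [seq \row_k (if (k == ij.1) || (k == ij.2) then - (1 / 5) else 4 / 5)
  | ij <- pairs5].

Definition L5 : seq 'rV[R]_5 :=
  [seq v : 'rV[R]_5 <- D5 | v 0 ord_max != 1] ++ halves5.

Definition Q5 : seq 'rV[R]_5 :=
  [seq v : 'rV[R]_5 <- D5 | coord_sum v != 2] ++ P5.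

Definition R5 : seq 'rV[R]_5 :=
  [seq v : 'rV[R]_5 <- L5 | coord_sum v != 2] ++ P5.

End Kissing.

(* Main.v *)
Require Import Defs.
From mathcomp Require Import all_boot all_order all_algebra.
From mathcomp Require Import reals.
From mathcomp Require Import ring lra.
Import Order.TTheory GRing.Theory Num.Theory.
Local Open Scope ring_scope.

Definition o0 : 'I_5 := @Ordinal 5 0 isT.
Definition o1 : 'I_5 := @Ordinal 5 1 isT.
Definition o2 : 'I_5 := @Ordinal 5 2 isT.
Definition o3 : 'I_5 := @Ordinal 5 3 isT.
Definition o4 : 'I_5 := ord_max.
Definition ords : seq 'I_5 := [:: o0; o1; o2; o3; o4].

Lemma enum5 : enum 'I_5 = ords.
Proof. by apply: (inj_map val_inj); rewrite val_enum_ord. Qed.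

Lemma enumX (T1 T2 : finType) :
  enum {: T1 * T2} = [seq (x1, x2) | x1 <- enum T1, x2 <- enum T2].
Proof. by rewrite [LHS]enumT unlock /= /prod_enum. Qed.

Lemma enumB : enum {: bool} = [:: true; false].
Proof. by rewrite enumT unlock. Qed.

Definition pairsL : seq ('I_5 * 'I_5) :=
  [:: (o0,o1); (o0,o2); (o0,o3); (o0,o4); (o1,o2); (o1,o3); (o1,o4);
      (o2,o3); (o2,o4); (o3,o4)].

Lemma pairs5E : pairs5 = pairsL.
Proof. by rewrite /pairs5 enumX enum5. Qed.

Lemma nth_ords (T : Type) (x0 : T) (f : 'I_5 -> T) (k : 'I_5) :
  nth x0 (map f ords) k = f k.
Proof. by rewrite -enum5 (nth_map k) ?size_enum_ord // nth_ord_enum. Qed.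

Definition sgnz (b : bool) : int := if b then -1 else 1.

Definition codeD (ij : 'I_5 * 'I_5) (ab : bool * bool) : seq int :=
  [seq (if k == ij.1 then 10 * sgnz ab.1 else if k == ij.2 then 10 * sgnz ab.2 else 0)
  | k <- ords].
Definition boolsL : seq (bool * bool) :=
  [seq (x1, x2) | x1 <- [:: true; false], x2 <- [:: true; false]].
Definition cD : seq (seq int) := [seq codeD ij ab | ij <- pairsL, ab <- boolsL].

Definition codeP (ij : 'I_5 * 'I_5) : seq int :=
  [seq (if (k == ij.1) || (k == ij.2) then -2 else 8) | k <- ords].
Definition cP : seq (seq int) := [seq codeP ij | ij <- pairsL].

Definition codeHb (b : seq bool) : seq int :=
  [:: 5 * sgnz (nth false b 0); 5 * sgnz (nth false b 1);
      5 * sgnz (nth false b 2); 5 * sgnz (nth false b 3); 10].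
Definition bitsL : seq (seq bool) :=
  [:: [:: true; false; false; false]; [:: false; true; false; false];
      [:: false; false; true; false]; [:: false; false; false; true];
      [:: false; true; true; true]; [:: true; false; true; true];
      [:: true; true; false; true]; [:: true; true; true; false]].
Definition cH : seq (seq int) := map codeHb bitsL.

Definition dotz (a b : seq int) : int :=
  a`_0 * b`_0 + a`_1 * b`_1 + a`_2 * b`_2 + a`_3 * b`_3 + a`_4 * b`_4.
Definition sumz (a : seq int) : int := a`_0 + a`_1 + a`_2 + a`_3 + a`_4.

Definition good (c : seq (seq int)) : bool :=
  [&& all (fun a => size a == 5%N) c, uniq c,
      all (fun a => dotz a a == 200) c &
      all (fun a => all (fun b => (a == b) || (dotz a b <= 100)) c) c].
Definition antiz (c : seq (seq int)) : nat :=
  sumn [seq count (fun b => dotz a b == -200) c | a <- c].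

Definition cL := [seq a <- cD | a`_4 != 10] ++ cH.
Definition cQ := [seq a <- cD | sumz a != 20] ++ cP.
Definition cR := [seq a <- cL | sumz a != 20] ++ cP.

Lemma goodD : good cD. Proof. by vm_compute. Qed.
Lemma goodL : good cL. Proof. by vm_compute. Qed.
Lemma goodQ : good cQ. Proof. by vm_compute. Qed.
Lemma goodR : good cR. Proof. by vm_compute. Qed.
Lemma sizes : [/\ size cD = 40%N, size cL = 40%N, size cQ = 40%N & size cR = 40%N].
Proof. by vm_compute. Qed.
Lemma antis : [/\ antiz cD = 40%N, antiz cL = 24%N, antiz cQ = 20%N & antiz cR = 12%N].
Proof. by vm_compute. Qed.


Definition codeH (s : {ffun 'I_5 -> bool}) : seq int :=
  [seq (if k == ord_max then 10 else 5 * sgnz (s k)) | k <- ords].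

Lemma codeH_bits s : codeH s = codeHb [:: s o0; s o1; s o2; s o3].
Proof. by []. Qed.

Lemma card_s (s : {ffun 'I_5 -> bool}) :
  #|[pred i | s i]| = count id [:: s o0; s o1; s o2; s o3; s o4].
Proof. by rewrite cardE /enum_mem -enumT enum5 size_filter /= !addn0. Qed.

Definition condb (b : seq bool) :=
  ~~ nth false b 4 && odd (count id [:: nth false b 0; nth false b 1;
                            nth false b 2; nth false b 3; nth false b 4]).

Lemma condb_all : all condb bitsL. Proof. by vm_compute. Qed.
Lemma uniq_cH : uniq cH. Proof. by vm_compute. Qed.

Lemma sgnz5 (x y : bool) : 5 * sgnz x = 5 * sgnz y -> x = y.
Proof. by case: x; case: y => // /eqP. Qed.

Lemma ord5P (k : 'I_5) : k \in ords.
Proof. by rewrite -enum5 mem_enum. Qed.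

Lemma permH :
  perm_eq (map codeH [seq s : {ffun 'I_5 -> bool} <- enum {: {ffun 'I_5 -> bool}} |
                       ~~ s ord_max && odd #|[pred i | s i]|]) cH.
Proof.
apply: uniq_perm; last 1 first.
- move=> x; apply/mapP/mapP.
  + move=> [s]; rewrite mem_filter => /andP[/andP[s4 odds] _] ->.
    exists [:: s o0; s o1; s o2; s o3] => //.
    move: s4 odds; rewrite card_s -/o4.
    by case: (s o0); case: (s o1); case: (s o2); case: (s o3); case: (s o4).
  + move=> [b bin ->]; exists [ffun k : 'I_5 => nth false b k]; last first.
      by rewrite codeH_bits !ffunE.
    rewrite mem_filter mem_enum andbT card_s !ffunE.
    exact: (allP condb_all).
- rewrite map_inj_in_uniq; first exact: filter_uniq (enum_uniq _).
  move=> s t; rewrite !mem_filter => /andP[/andP[s4 _] _] /andP[/andP[t4 _] _].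
  rewrite !codeH_bits /codeHb /= => -[/sgnz5 e0 /sgnz5 e1 /sgnz5 e2 /sgnz5 e3].
  apply/ffunP => k; have := ord5P k; rewrite !inE.
  case/orP => [/eqP->//|]; case/orP => [/eqP->//|]; case/orP => [/eqP->//|].
  case/orP => [/eqP->//|/eqP->]; by rewrite (negbTE s4) (negbTE t4).
- exact: uniq_cH.
Qed.

Section Real.
Variable R : realType.


Definition emb (a : seq int) : 'rV[R]_5 := \row_k ((a`_k)%:~R / 10).

Lemma div10_inj (x y : int) : (x%:~R / 10 = y%:~R / 10 :> R) -> x = y.
Proof.
move=> H; apply/eqP; rewrite -(eqr_int R); apply/eqP.
have : x%:~R / 10 * 10 = y%:~R / 10 * (10 : R) by rewrite H.
by rewrite !divfK // pnatr_eq0.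
Qed.

Lemma eq_div10 (x y : int) : (x%:~R / 10 == y%:~R / 10 :> R) = (x == y).
Proof. by apply/eqP/eqP => [/div10_inj|->]. Qed.

Lemma dot_emb a b : dotv (emb a) (emb b) = (dotz a b)%:~R / 100.
Proof.
rewrite /dotv !big_ord_recr big_ord0 /= !mxE /dotz /=.
by rewrite !rmorphD !rmorphM /=; field.
Qed.

Lemma sum_emb a : coord_sum (emb a) = (sumz a)%:~R / 10.
Proof.
rewrite /coord_sum !big_ord_recr big_ord0 /= !mxE /sumz /=.
by rewrite !rmorphD /=; field.
Qed.

Lemma emb_inj a b : size a = 5%N -> size b = 5%N -> emb a = emb b -> a = b.
Proof.
move=> sa sb e; apply: (@eq_from_nth _ 0) => [|i]; first by rewrite sa sb.
rewrite sa => lti; have := congr1 (fun v : 'rV[R]_5 => v 0 (Ordinal lti)) e.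
by rewrite /= !mxE => /div10_inj.
Qed.

Lemma le100 (x : int) : (x <= 100) -> (x%:~R / 100 <= 2 / 2 :> R).
Proof.
move=> h; rewrite (_ : 2 / 2 = 100%:~R / 100); last by field.
by rewrite ler_pM2r ?invr_gt0 ?ltr0n // ler_int.
Qed.

Lemma eq_m2 (x : int) : (x%:~R / 100 == -2 :> R) = (x == -200).
Proof.
rewrite (_ : -2 = (-200)%:~R / 100); last by field.
apply/eqP/eqP => [H|->//]; apply/eqP; rewrite -(eqr_int R); apply/eqP.
have : x%:~R / 100 * 100 = (-200)%:~R / 100 * (100 : R) by rewrite H.
by rewrite !divfK // pnatr_eq0.
Qed.

Definition anti {n} (S : seq 'rV[R]_n) : nat :=
  sumn [seq count (fun v => dotv u v == -2) S | u <- S].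

Lemma anti_emb c : anti (map emb c) = antiz c.
Proof.
rewrite /anti /antiz -map_comp; congr sumn; apply: eq_map => a /=.
by rewrite count_map; apply: eq_count => b /=; rewrite dot_emb eq_m2.
Qed.

Lemma anti_perm {n} (S T : seq 'rV[R]_n) : perm_eq S T -> anti S = anti T.
Proof.
move=> p; rewrite /anti (perm_sumn (perm_map _ p)); congr sumn.
by apply: eq_map => u; apply: (permP p).
Qed.

Lemma dotv_mx n (u v : 'rV[R]_n) : dotv u v = (u *m v^T) 0 0.
Proof. by rewrite /dotv mxE; apply: eq_bigr => k _; rewrite mxE. Qed.

Lemma dot_mulmx {n} (Q : 'M[R]_n) : orthogonal_mx Q ->
  forall u v, dotv (u *m Q) (v *m Q) = dotv u v.
Proof.
move=> oQ u v; rewrite !dotv_mx trmx_mul !mulmxA -(mulmxA u) oQ mulmx1 //.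
Qed.

Lemma iso_anti n (S T : seq 'rV[R]_n) :
  uniq S -> uniq T -> isometric S T -> anti S = anti T.
Proof.
move=> uS uT [Q [oQ eST]].
have inj : injective (fun v : 'rV[R]_n => v *m Q).
  by move=> u v e; rewrite -[u]mulmx1 -[v]mulmx1 -oQ !mulmxA e.
have p : perm_eq (map (fun v => v *m Q) S) T.
  by apply: uniq_perm => //; rewrite map_inj_uniq.
rewrite -(anti_perm _ _ p) /anti -map_comp; congr sumn; apply: eq_map => u /=.
by rewrite count_map; apply: eq_count => v /=; rewrite (dot_mulmx _ oQ).
Qed.

Lemma good_kissing S c : perm_eq S (map emb c) -> good c -> kissing_config S.
Proof.
move=> pS /and4P[sz uc nok pok].
have embI : {in c &, injective emb}.
  by move=> a b /(allP sz)/eqP ? /(allP sz)/eqP ?; apply: emb_inj.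
split; first by rewrite (perm_uniq pS) map_inj_in_uniq.
exists (Num.sqrt 2); split; first by rewrite sqrtr_gt0.
rewrite sqr_sqrtr ?ler0n //; split.
  move=> v; rewrite (perm_mem pS) => /mapP[a ac ->]; rewrite dot_emb.
  by have /eqP -> := allP nok a ac; field.
move=> u v; rewrite !(perm_mem pS) => /mapP[a ac ->] /mapP[b bc ->] neq.
rewrite dot_emb; have nab : a != b by apply: contraNneq neq => ->.
by have := allP (allP pok a ac) b bc; rewrite (negbTE nab) /=; apply: le100.
Qed.


Lemma sgn_emb (b : bool) : (sgn R b) = (10 * sgnz b)%:~R / 10.
Proof. by case: b; rewrite /sgn /sgnz /=; field. Qed.

Lemma D5E : D5 R = map emb cD.
Proof.
rewrite /D5 pairs5E enumX enumB /cD /boolsL map_allpairs.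
apply: eq_allpairs => ij ab; apply/rowP => k; rewrite !mxE /codeD nth_ords.
case: ifP => _; first exact: sgn_emb.
case: ifP => _; first exact: sgn_emb.
by rewrite mul0r.
Qed.

Lemma P5E : P5 R = map emb cP.
Proof.
rewrite /P5 pairs5E /cP -map_comp; apply: eq_map => ij /=.
apply/rowP => k; rewrite !mxE /codeP nth_ords.
by case: ifP => _; field.
Qed.


Lemma halvesP : perm_eq (halves5 R) (map emb cH).
Proof.
have -> : halves5 R = map emb (map codeH [seq s : {ffun 'I_5 -> bool} <- enum {: {ffun 'I_5 -> bool}} |
                       ~~ s ord_max && odd #|[pred i | s i]|]).
  rewrite /halves5 -map_comp; apply: eq_map => s /=.
  apply/rowP => k; rewrite !mxE /codeH nth_ords.
  case: ifP => _; first by field.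
  by case: (s k); rewrite /sgn /sgnz /= ?rmorphM /=; field.
exact: perm_map permH.
Qed.


Lemma eq_div10_c (x y : int) (c : R) : c = y%:~R / 10 ->
  (x%:~R / 10 == c) = (x == y).
Proof. by move=> ->; rewrite eq_div10. Qed.

Lemma filt_emb c (p : 'rV[R]_5 -> bool) (q : seq int -> bool) :
  (forall a, p (emb a) = q a) -> filter p (map emb c) = map emb (filter q c).
Proof. by move=> h; rewrite filter_map; congr map; apply: eq_filter. Qed.

Lemma filt4 c : [seq v : 'rV[R]_5 <- map emb c | v 0 ord_max != 1] =
                map emb [seq a <- c | a`_4 != 10].
Proof.
apply: filt_emb => a; rewrite mxE /=.
by rewrite (@eq_div10_c _ 10) //; field.
Qed.

Lemma filt20 c : [seq v : 'rV[R]_5 <- map emb c | coord_sum v != 2] =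
                 map emb [seq a <- c | sumz a != 20].
Proof.
apply: filt_emb => a; rewrite sum_emb.
by rewrite (@eq_div10_c _ 20) //; field.
Qed.

Lemma L5P : perm_eq (L5 R) (map emb cL).
Proof.
rewrite /L5 /cL map_cat D5E filt4.
exact: perm_cat (perm_refl _) halvesP.
Qed.

Lemma Q5E : Q5 R = map emb cQ.
Proof. by rewrite /Q5 /cQ map_cat D5E P5E filt20. Qed.

Lemma R5P : perm_eq (R5 R) (map emb cR).
Proof.
rewrite /R5 /cR map_cat P5E -filt20.
exact: perm_cat (perm_filter _ L5P) (perm_refl _).
Qed.

Lemma noniso S T c d : perm_eq S (map emb c) -> perm_eq T (map emb d) ->
  good c -> good d -> isometric S T -> antiz c = antiz d.
Proof.
move=> pS pT gc gd iso.
have [uS _] := good_kissing _ _ pS gc; have [uT _] := good_kissing _ _ pT gd.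
by rewrite -!anti_emb -(anti_perm _ _ pS) -(anti_perm _ _ pT) (iso_anti _ _ _ uS uT iso).
Qed.

Lemma noniso2 S T c d (m k : nat) : perm_eq S (map emb c) -> perm_eq T (map emb d) ->
  good c -> good d -> antiz c = m -> antiz d = k -> m <> k -> ~ isometric S T.
Proof.
move=> pS pT gc gd ec ed mk iso; apply: mk.
exact: etrans (esym ec) (etrans (noniso _ _ _ _ pS pT gc gd iso) ed).
Qed.

Lemma sizeP S c : perm_eq S (map emb c) -> size S = size c.
Proof. by move/perm_size ->; rewrite size_map. Qed.

End Real.

Theorem mainTheorem1 (R : realType) :
  (kissing_config (D5 R) /\ size (D5 R) = 40%N) /\
  (kissing_config (L5 R) /\ size (L5 R) = 40%N) /\
  (kissing_config (Q5 R) /\ size (Q5 R) = 40%N) /\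
  (kissing_config (R5 R) /\ size (R5 R) = 40%N) /\
  ~ isometric (D5 R) (L5 R) /\ ~ isometric (D5 R) (Q5 R) /\
  ~ isometric (D5 R) (R5 R) /\ ~ isometric (L5 R) (Q5 R) /\
  ~ isometric (L5 R) (R5 R) /\ ~ isometric (Q5 R) (R5 R).
Proof.
have pD : perm_eq (D5 R) (map (emb R) cD) by rewrite D5E; exact: perm_refl.
have pQ : perm_eq (Q5 R) (map (emb R) cQ) by rewrite Q5E; exact: perm_refl.
have pL := L5P R; have pR := R5P R.
have [sD sL sQ sR] := sizes; have [aD aL aQ aR] := antis.
split; first by split; [apply: (good_kissing _ _ _ pD); exact: goodD | rewrite (sizeP _ _ _ pD) sD].
split; first by split; [apply: (good_kissing _ _ _ pL); exact: goodL | rewrite (sizeP _ _ _ pL) sL].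
split; first by split; [apply: (good_kissing _ _ _ pQ); exact: goodQ | rewrite (sizeP _ _ _ pQ) sQ].
split; first by split; [apply: (good_kissing _ _ _ pR); exact: goodR | rewrite (sizeP _ _ _ pR) sR].
split; first exact: (noniso2 _ _ _ _ _ _ _ pD pL goodD goodL aD aL (fun e => (ltac:(discriminate) : False))).
split; first exact: (noniso2 _ _ _ _ _ _ _ pD pQ goodD goodQ aD aQ (fun e => (ltac:(discriminate) : False))).
split; first exact: (noniso2 _ _ _ _ _ _ _ pD pR goodD goodR aD aR (fun e => (ltac:(discriminate) : False))).
split; first exact: (noniso2 _ _ _ _ _ _ _ pL pQ goodL goodQ aL aQ (fun e => (ltac:(discriminate) : False))).
split; first exact: (noniso2 _ _ _ _ _ _ _ pL pR goodL goodR aL aR (fun e => (ltac:(discriminate) : False))).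
exact: (noniso2 _ _ _ _ _ _ _ pQ pR goodQ goodR aQ aR (fun e => (ltac:(discriminate) : False))).
Qed.
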